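(* Let $\mathcal{S}$ be a state space and let $\mathsf{M}^{(1)},\mathsf{M}^{(2)}$ be measurements on $\mathcal{S}$ with $m_1$ and $m_2$ outcomes respectively. If $$\lambda_{max}(\mathsf{H}^{(1,2)})>\frac{\lambda_{max}(\mathcal{S})+m_1m_2}{m_1+m_2},$$ then $\mathsf{M}^{(1)}$ and $\mathsf{M}^{(2)}$ are incompatible.
   Context: General probabilistic theory setting: a state space $\mathcal{S}$ is a compact convex subset of a finite-dimensional real vector space, embedded as a base of a closed generating proper cone in a vector space $V$, with unit effect $u$. Effects are linear functionals $e$ on $V$ with $0\le e\le1$ on $\mathcal{S}$; $\|f\|=\max_{s\in\mathcal{S}}|f(s)|$. A measurement with finite outcome set $\Omega$ is a map $x\mapsto\mathsf{M}_x$ to effects with $\sum_x\mathsf{M}_x=u$; its decoding power is $\lambda_{max}(\mathsf{M})=\sum_x\|\mathsf{M}_x\|$, and $\lambda_{max}(\mathcal{S})$ is the supremum of $\lambda_{max}(\mathsf{M})$ over all measurements on $\mathcal{S}$ with finite outcome sets. $\mathsf{M}^{(1)}$ (outcomes $\Omega_1$) and $\mathsf{M}^{(2)}$ (outcomes $\Omega_2$) are compatible if there is a measurement $\mathsf{J}$ with outcome set $\Omega_1\times\Omega_2$ with $\sum_y\mathsf{J}_{x,y}=\mathsf{M}^{(1)}_x$ and $\sum_x\mathsf{J}_{x,y}=\mathsf{M}^{(2)}_y$, and incompatible otherwise. The harmonic approximate joint measurement $\mathsf{H}^{(1,2)}$ has outcome set $\Omega_1\times\Omega_2$ and effects $\mathsf{H}^{(1,2)}_{x,y}=\frac{1}{m_1+m_2}(\mathsf{M}^{(1)}_x+\mathsf{M}^{(2)}_y)$.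 *)

(* Defs.v *)
From HB Require Import structures.
From mathcomp Require Import all_boot all_order all_algebra.
From mathcomp Require Import all_classical all_reals all_analysis.
Set Implicit Arguments. Unset Strict Implicit. Unset Printing Implicit Defensive.
Import Order.TTheory GRing.Theory Num.Theory.
Import numFieldNormedType.Exports.
Local Open Scope classical_set_scope.
Local Open Scope ring_scope.

(* The ambient vector space V is R^n, realised as row vectors 'rV[R]_n.
   Linear functionals on V are represented by column vectors 'cV[R]_n,
   acting by  ev e s = s *m e. *)
Definition ev {R : realType} {n : nat} (e : 'cV[R]_n) (s : 'rV[R]_n) : R :=
  (s *m e) 0 0.

Definition gen_cone {R : realType} {n : nat} (S : set 'rV[R]_n) : set 'rV[R]_n :=
  [set v | exists t : R, exists s, 0 <= t /\ S s /\ v = t *: s].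

Definition convex_subset {R : realType} {n : nat} (S : set 'rV[R]_n) : Prop :=
  forall s t (l : R), S s -> S t -> 0 <= l <= 1 -> S (l *: s + (1 - l) *: t).

(* S is a state space with unit effect u: a nonempty compact convex subset of V
   which is the base { c in C | u c = 1 } of the closed, generating, proper cone
   C generated by S. *)
Definition state_space {R : realType} {n : nat} (S : set 'rV[R]_n) (u : 'cV[R]_n)
  : Prop :=
  [/\ S !=set0, compact S, convex_subset S & (forall s, S s -> ev u s = 1)] /\
  [/\ closed (gen_cone S),
      (forall v, exists a b, gen_cone S a /\ gen_cone S b /\ v = a - b) &
      (forall v, gen_cone S v -> gen_cone S (- v) -> v = 0)].

Definition is_effect {R : realType} {n : nat} (S : set 'rV[R]_n) (e : 'cV[R]_n)
  : Prop := forall s, S s -> 0 <= ev e s <= 1.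

Definition is_measurement {R : realType} {n : nat} (S : set 'rV[R]_n)
  (u : 'cV[R]_n) {Omega : finType} (M : Omega -> 'cV[R]_n) : Prop :=
  (forall x, is_effect S (M x)) /\ \sum_(x : Omega) M x = u.

(* ||f|| = max_{s in S} |f(s)| (a max since S is compact and nonempty). *)
Definition fnorm {R : realType} {n : nat} (S : set 'rV[R]_n) (f : 'cV[R]_n) : R :=
  sup [set `|ev f s| | s in S].

Definition decoding_power {R : realType} {n : nat} (S : set 'rV[R]_n)
  {Omega : finType} (M : Omega -> 'cV[R]_n) : R :=
  \sum_(x : Omega) fnorm S (M x).

(* lambda_max(S): supremum over all measurements with finite outcome sets
   (extended-real valued, so no finiteness is presupposed). *)
Definition lambda_max_S {R : realType} {n : nat} (S : set 'rV[R]_n)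
  (u : 'cV[R]_n) : \bar R :=
  ereal_sup [set r : \bar R | exists (Omega : finType) (M : Omega -> 'cV[R]_n),
    is_measurement S u M /\ r = (decoding_power S M)%:E].

Definition compatible {R : realType} {n : nat} (S : set 'rV[R]_n) (u : 'cV[R]_n)
  {O1 O2 : finType} (M1 : O1 -> 'cV[R]_n) (M2 : O2 -> 'cV[R]_n) : Prop :=
  exists J : O1 * O2 -> 'cV[R]_n,
    [/\ is_measurement S u J,
        (forall x, \sum_(y : O2) J (x, y) = M1 x) &
        (forall y, \sum_(x : O1) J (x, y) = M2 y)].

Definition harmonic_ajm {R : realType} {n m1 m2 : nat}
  (M1 : 'I_m1 -> 'cV[R]_n) (M2 : 'I_m2 -> 'cV[R]_n) : 'I_m1 * 'I_m2 -> 'cV[R]_n :=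
  fun xy => ((m1 + m2)%:R)^-1 *: (M1 xy.1 + M2 xy.2).

(* Main.v *)
Require Import Defs.
From HB Require Import structures.
From mathcomp Require Import all_boot all_order all_algebra.
From mathcomp Require Import all_classical all_reals all_analysis.
Import Order.TTheory GRing.Theory Num.Theory.
Import numFieldNormedType.Exports.
Local Open Scope ring_scope.

Section H.
Variables (R : realType) (n : nat).

Lemma ev_add (a b : 'cV[R]_n) s : ev (a + b) s = ev a s + ev b s.
Proof. by rewrite /ev mulmxDr mxE. Qed.

Lemma ev_scale (c : R) (a : 'cV[R]_n) s : ev (c *: a) s = c * ev a s.
Proof. by rewrite /ev -scalemxAr mxE. Qed.

Lemma ev_sum (I : finType) (F : I -> 'cV[R]_n) s :
  ev (\sum_i F i) s = \sum_i ev (F i) s.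
Proof. by rewrite /ev mulmx_sumr summxE. Qed.

Lemma fnorm_ub (S : set 'rV[R]_n) e s : is_effect S e -> S s -> ev e s <= fnorm S e.
Proof.
move=> He Ss; rewrite /fnorm.
have hub : has_ubound [set `|ev e s0| | s0 in S].
  exists 1 => _ [s0 S0 <-]; have /andP[h0 h1] := He s0 S0.
  by rewrite ger0_norm.
apply: le_trans (ler_norm _) _.
by apply: ub_le_sup => //; exists s.
Qed.

Lemma fnorm_le (S : set 'rV[R]_n) f b : (S !=set0)%classic ->
  (forall s, S s -> `|ev f s| <= b) -> fnorm S f <= b.
Proof.
move=> [s0 S0] H; apply: ge_sup; first by exists `|ev f s0|, s0.
by move=> _ [s Ss <-]; exact: H.
Qed.
End H.

Theorem corollary1 (R : realType) (n : nat) (S : set 'rV[R]_n) (u : 'cV[R]_n)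
  (m1 m2 : nat) (M1 : 'I_m1 -> 'cV[R]_n) (M2 : 'I_m2 -> 'cV[R]_n) :
  state_space S u ->
  is_measurement S u M1 -> is_measurement S u M2 ->
  ((lambda_max_S S u + ((m1 * m2)%:R)%:E) * (((m1 + m2)%:R)^-1)%:E
     < (decoding_power S (harmonic_ajm M1 M2))%:E)%E ->
  ~ compatible S u M1 M2.
Proof.
move=> [[Sne _ _ Su] _] _ _ Hlt [J [[HJe HJs] H1 H2]].
set c : R := ((m1 + m2)%:R)^-1.
have c0 : 0 <= c by rewrite /c invr_ge0.
have Jge0 : forall p s, S s -> 0 <= ev (J p) s.
  by move=> p s Ss; have /andP[] := HJe p s Ss.
have key : forall x y s, S s ->
    ev (M1 x) s + ev (M2 y) s <= ev (J (x, y)) s + 1.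
  move=> x y s Ss.
  have tot : \sum_x' \sum_y' ev (J (x', y')) s = 1.
    rewrite (pair_big _ _ (fun a b => ev (J (a, b)) s)) /=.
    rewrite -(Su s Ss) -HJs ev_sum; apply: eq_bigr => -[a b] _ //.
  rewrite -H1 -H2 !ev_sum -tot.
  rewrite [X in _ <= _ + X](bigD1 x) //= [X in _ + X <= _](bigD1 x) //=.
  rewrite addrCA lerD2l.
  rewrite lerD2l.
  apply: ler_sum => x' _.
  rewrite (bigD1 y) //= lerDl; apply: sumr_ge0 => y' _; exact: Jge0.
have bnd : forall p, fnorm S (harmonic_ajm M1 M2 p) <= c * (fnorm S (J p) + 1).
  move=> [x y]; apply: fnorm_le => // s Ss.
  rewrite /harmonic_ajm ev_scale ev_add -/c /=.
  have e1 : 0 <= ev (M1 x) s + ev (M2 y) s.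
    rewrite -H1 -H2 !ev_sum; apply: addr_ge0; apply: sumr_ge0 => i _; exact: Jge0.
  rewrite ger0_norm; last exact: mulr_ge0.
  apply: ler_wpM2l => //; apply: le_trans (key x y s Ss) _.
  by rewrite lerD2r; apply: fnorm_ub.
have dH : decoding_power S (harmonic_ajm M1 M2)
    <= c * (decoding_power S J + (m1 * m2)%:R).
  rewrite /decoding_power; apply: le_trans (ler_sum _ (fun p _ => bnd p)) _.
  rewrite -mulr_sumr big_split /= sumr_const card_prod !card_ord.
  by [].
have dJ : ((decoding_power S J)%:E <= lambda_max_S S u)%E.
  apply: le_ereal_sup_tmp; exists (decoding_power S J)%:E => //.
  by exists _, J.
have : ((decoding_power S J + (m1 * m2)%:R)%:E * c%:E
         <= (lambda_max_S S u + ((m1 * m2)%:R)%:E) * c%:E)%E.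
  by apply: lee_wpmul2r; [rewrite lee_fin | rewrite EFinD; apply: leeD2r].
rewrite -EFinM => h.
have h3 : (decoding_power S J + (m1 * m2)%:R) * c < decoding_power S (harmonic_ajm M1 M2).
  rewrite -lte_fin; exact: le_lt_trans h Hlt.
rewrite mulrC in h3.
have := lt_le_trans h3 dH.
by rewrite ltxx.
Qed.
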